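(* Let $E$ be a topological space with (Krull) dimension $\dim E<\infty$. (i) If $\Gamma(x_0,x_n)$ is a presentation for the length of $E$, then $x_0$ is initial in $E$ and $x_n$ is final in $E$. (ii) If $E$ has the $(UIP)$-property, then $l(E)=\dim E$.
   Context: For $x,y$ in a topological space $E$, write $x\rightarrow y$ if $y\in\overline{\{x\}}$, and $x\leftrightarrow y$ if both $x\rightarrow y$ and $y\rightarrow x$. A point $x$ is initial in $E$ if $x\leftrightarrow z$ for every $z\in E$ with $z\rightarrow x$, and final in $E$ if $x\leftrightarrow z$ for every $z\in E$ with $x\rightarrow z$. For $x\rightarrow y$ in $E$, a restrict series of specializations $\Gamma(x,y)$ from $x$ to $y$ is a chain $x=x_0\rightarrow x_1\rightarrow\cdots\rightarrow x_n=y$ in $E$ such that: if $y\rightarrow x$ then $y=x$ (and the chain is trivial); if $y\not\rightarrow x$, then for each $i=0,\dots,n-1$, $x_{i+1}\not\rightarrow x_i$ (i.e. $x_i$ is not a specialization of $x_{i+1}$). Its length is $n$. The length $l(x,y)$ is the supremum of lengths of restrict series from $x$ to $y$, and $l(E)=\sup\{l(x,y): x,y\in E,\ x\rightarrow y\}$. A restrict series in $E$ is a presentation for the length of $E$ if its length equals $l(E)$. $\dim E$ is the supremum of the lengths $n$ of chains $F_0\supsetneq F_1\supsetneq\cdots\supsetneq F_n$ of irreducible closed subsets of $E$. $E$ has the $(UIP)$-property if every irreducible closed subset $U$ of $E$ contains exactly one point $x_U$ initial in $U$ (subspace topology), and $x_U\neq x_V$ for distinct irreducible closed subsets $U\neq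 V$. *)

(* Defs.v *)
From HB Require Import structures.
From mathcomp Require Import all_boot all_order.
From mathcomp Require Import all_classical all_reals all_analysis.
Set Implicit Arguments. Unset Strict Implicit. Unset Printing Implicit Defensive.
Local Open Scope classical_set_scope.

Section Defs.
Variable T : topologicalType.

Definition spec (x y : T) : Prop := closure [set x] y.

Definition spec_in (A : set T) (x y : T) : Prop :=
  A x /\ A y /\ @closure (subspace A) [set x] y.

Definition initial_in (A : set T) (x : T) : Prop :=
  A x /\ forall z, A z -> spec_in A z x -> (spec_in A x z /\ spec_in A z x).

Definition final_in (A : set T) (x : T) : Prop :=
  A x /\ forall z, A z -> spec_in A x z -> (spec_in A x z /\ spec_in A z x).

Definition initial (x : T) : Prop := initial_in setT x.
Definition final (x : T) : Prop := final_in setT x.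

Definition restrict_series (s : nat -> T) (n : nat) (x y : T) : Prop :=
  s 0%N = x /\ s n = y /\ (forall i, (i < n)%N -> spec (s i) (s i.+1)) /\
  (spec y x -> y = x /\ n = 0%N) /\
  (~ spec y x -> forall i, (i < n)%N -> ~ spec (s i.+1) (s i)).

(* n is the supremum (in nat, with sup of the empty set = 0) of S *)
Definition is_sup_nat (S : set nat) (n : nat) : Prop :=
  (forall m, S m -> (m <= n)%N) /\
  (forall b, (forall m, S m -> (m <= b)%N) -> (n <= b)%N).

Definition length_pt (x y : T) (l : nat) : Prop :=
  is_sup_nat [set m | exists s, restrict_series s m x y] l.

Definition space_length (l : nat) : Prop :=
  is_sup_nat [set m | exists x y s, spec x y /\ restrict_series s m x y] l.

Definition irreducible_closed (U : set T) : Prop :=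
  closed U /\ U !=set0 /\
  forall F G : set T, closed F -> closed G -> U `<=` F `|` G ->
    U `<=` F \/ U `<=` G.

Definition irr_chain (F : nat -> set T) (n : nat) : Prop :=
  (forall i, (i <= n)%N -> irreducible_closed (F i)) /\
  (forall i, (i < n)%N -> F i.+1 `<=` F i /\ F i.+1 <> F i).

Definition krull_dim (d : nat) : Prop :=
  is_sup_nat [set n | exists F, irr_chain F n] d.

Definition UIP : Prop :=
  (forall U, irreducible_closed U -> exists! x, initial_in U x) /\
  (forall U V xU xV, irreducible_closed U -> irreducible_closed V -> U <> V ->
     initial_in U xU -> initial_in V xV -> xU <> xV).

End Defs.

(* Main.v *)
Require Import Defs.
From mathcomp Require Import all_boot all_order.
From mathcomp Require Import all_classical all_reals all_analysis.
From mathcomp Require Import zify.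
Local Open Scope classical_set_scope.
Set Implicit Arguments.

Lemma spec_inE (T : topologicalType) (A : set T) (x y : T) : A x -> A y ->
  (@closure (subspace A) [set x] y <-> closure [set x] y).
Proof.
move=> Ax Ay; split.
- move=> h B nB. have nB' : nbhs_subspace (y : subspace A) B.
    rewrite -(@nbhs_subspace_in _ A y Ay) /within /=.
    by apply: filterS nB => z Bz _.
  case: (h B nB') => z [-> Bz]; by exists x.
- move=> h B nB.
  have : within A (nbhs y) B by rewrite (@nbhs_subspace_in _ A y Ay).
  rewrite /within /= => nB2.
  case: (h _ nB2) => z [zx Bz]. exists x; split => //. rewrite zx in Bz. exact: Bz.
Qed.

Lemma spec_inT (T : topologicalType) (x y : T) : spec_in setT x y <-> spec x y.
Proof.
split; first by case=> _ [_ h]; apply: (@spec_inE T setT x y Logic.I Logic.I).1.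
by move=> h; split => //; split => //; apply: (@spec_inE T setT x y Logic.I Logic.I).2.
Qed.

Lemma cl_min (T : topologicalType) (F : set T) (x : T) :
  closed F -> F x -> closure [set x] `<=` F.
Proof.
move=> cF Fx z hz; rewrite ((closure_id F).1 cF); apply: closureS hz.
by move=> w ->.
Qed.

Lemma spec_refl (T : topologicalType) (x : T) : spec x x.
Proof. exact: subset_closure. Qed.

Lemma spec_trans (T : topologicalType) (x y z : T) :
  spec x y -> spec y z -> spec x z.
Proof.
rewrite /spec => hxy hyz; exact: (cl_min (@closed_closure T [set x]) hxy hyz).
Qed.

Lemma rs_spec (T : topologicalType) (s : nat -> T) n x y :
  restrict_series s n x y -> spec x y.
Proof.
case=> [s0 [sn [ch _]]].
have : forall i, (i <= n)%N -> spec (s 0%N) (s i).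
  elim=> [|i IH] hi; first exact: spec_refl.
  apply: spec_trans (IH (ltnW hi)) (ch i hi).
by move/(_ n (leqnn n)); rewrite s0 sn.
Qed.

Lemma sup_attained (S : set nat) n : is_sup_nat S n -> n = 0%N \/ S n.
Proof.
case: n => [|k] [h1 h2]; first by left.
right; case: (pselect (S k.+1)) => // nS; exfalso.
have : (k.+1 <= k)%N.
  apply: h2 => m Sm; have := h1 m Sm.
  have : m <> k.+1 by move=> e; apply: nS; rewrite -e.
  lia.
lia.
Qed.

Lemma pt_irr (T : topologicalType) (x : T) : irreducible_closed (closure [set x]).
Proof.
split; first exact: closed_closure.
split; first by exists x; apply: subset_closure.
move=> F G cF cG h.
case: (h x (subset_closure (erefl x))) => [Fx|Gx].
- by left; apply: cl_min.
- by right; apply: cl_min.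
Qed.

Lemma pt_initial (T : topologicalType) (x : T) : initial_in (closure [set x]) x.
Proof.
split; first exact: subset_closure.
move=> z hz hzx; split => //.
split; first exact: subset_closure.
split => //.
exact: ((@spec_inE T (closure [set x]) x z (subset_closure (erefl x)) hz).2 hz).
Qed.

Lemma generic (T : topologicalType) (U : set T) :
  UIP T -> irreducible_closed U -> exists x, U = closure [set x].
Proof.
move=> [u1 u2] hU.
case: (u1 U hU) => x [hx _].
exists x; case: (pselect (U = closure [set x])) => // ne.
by case: (u2 U (closure [set x]) x x hU (pt_irr T x) ne hx (pt_initial T x)).
Qed.

Unset Implicit Arguments.

Theorem lemma2p1 (T : topologicalType) (d : nat) (hdim : krull_dim T d) :
  (forall (s : nat -> T) (n : nat),
      space_length T n -> restrict_series s n (s 0%N) (s n) ->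
      initial (s 0%N) /\ final (s n)) /\
  (UIP T -> space_length T d).
Proof.
split.
- move=> s n hl hs.
  have hxy := rs_spec hs.
  case: (hs) => _ [_ [ch [c1 c2]]].
  split.
  + split => // z _ /spec_inT hzx; split; last exact/spec_inT.
    apply/spec_inT; case: (pselect (spec (s 0%N) z)) => // nxz; exfalso.
    pose s' := fun i => if i is j.+1 then s j else z.
    have hrs : restrict_series s' n.+1 z (s n).
      split => //; split => //; split.
        by case=> [|i] hi //=; apply: ch.
      split.
        move=> hyz; exfalso.
        have [e n0] := c1 (spec_trans hyz hzx).
        by apply: nxz; rewrite -e.
      move=> _ [|i] hi /=; first exact: nxz.
      apply: c2 => //.
      by move=> hyx; have [_ n0] := c1 hyx; rewrite n0 in hi.
    suff: (n.+1 <= n)%N by rewrite ltnn.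
    apply: hl.1.
    by exists z, (s n), s'; split => //; apply: spec_trans hzx hxy.
  + split => // z _ /spec_inT hyz; split; first exact/spec_inT.
    apply/spec_inT; case: (pselect (spec z (s n))) => // nzy; exfalso.
    pose s' := fun i => if (i <= n)%N then s i else z.
    have hrs : restrict_series s' n.+1 (s 0%N) z.
      split => //; split; first by rewrite /s' ltnn.
      split.
        move=> i hi; rewrite /s'; case: (ltngtP i n) => hin.
        * by apply: ch.
        * lia.
        * by rewrite hin.
      split.
        by move=> hzx; exfalso; apply: nzy; apply: spec_trans hzx hxy.
      move=> _ i hi; rewrite /s'; case: (ltngtP i n) => hin.
      * apply: c2 => //.
        by move=> hyx; have [_ n0] := c1 hyx; rewrite n0 in hin.
      * lia.
      * by rewrite hin.
    suff: (n.+1 <= n)%N by rewrite ltnn.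
    apply: hl.1.
    by exists (s 0%N), z, s'; split => //; apply: spec_trans hxy hyz.
- move=> huip; split.
  + move=> m [x [y [s [hxy hs]]]].
    case: (hs) => s0 [sn [ch [c1 c2]]].
    case: (pselect (spec y x)) => hyx.
      by have [_ ->] := c1 hyx.
    apply: hdim.1; exists (fun i => closure [set s i]); split.
      by move=> i _; apply: pt_irr.
    move=> i hi; split.
      by move=> z hz; apply: spec_trans (ch i hi) hz.
    move=> e; apply: (c2 hyx i hi).
    have : closure [set s i] (s i) by apply: subset_closure.
    by rewrite -e.
  + move=> b hb.
    case: (sup_attained hdim) => [->//|[F [hirr hch]]].
    case: (ltnP 0 d) => hd; last by have -> : d = 0%N by lia.
    have [x0 _] := (hirr 0%N (leq0n d)).2.1.
    have : forall i, exists x, (i <= d)%N -> F i = closure [set x].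
      move=> i; case: (leqP i d) => hi.
        by have [x ->] := generic huip (hirr i hi); exists x.
      by exists x0.
    case/choice => g hg.
    have mono : forall i j, (j <= d)%N -> (i <= j)%N -> F j `<=` F i.
      move=> i; elim=> [|j IH] hj hij.
        by have -> : i = 0%N by lia.
      case: (leqP i j) => h.
        by move=> z /(hch j hj).1 /(IH (ltnW hj) h).
      by have -> : i = j.+1 by lia.
    have gin : forall i, (i <= d)%N -> F i (g i).
      by move=> i hi; rewrite (hg i hi); apply: subset_closure.
    have spF : forall i z, (i <= d)%N -> F i z -> spec (g i) z.
      by move=> i z hi; rewrite (hg i hi).
    have clF : forall i, (i <= d)%N -> F i = closure [set g i] by [].
    apply: hb; exists (g 0%N), (g d), g; split.
      apply: spF => //; apply: (mono 0%N d) => //; exact: gin.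
    split => //; split => //; split.
      move=> i hi; apply: spF; first exact: ltnW.
      by apply: (hch i hi).1; apply: gin.
    split.
      move=> hdx; exfalso.
      have h0d : F 0%N `<=` F d.
        rewrite (clF 0%N (leq0n d)) (clF d (leqnn d)).
        by move=> z hz; apply: spec_trans hdx hz.
      apply: (hch 0%N hd).2; apply/seteqP; split; first exact: (hch 0%N hd).1.
      by move=> z /h0d; apply: mono.
    move=> _ i hi hsp; apply: (hch i hi).2.
    apply/seteqP; split; first exact: (hch i hi).1.
    rewrite (clF i (ltnW hi)) (clF i.+1 hi).
    by move=> z hz; apply: spec_trans hsp hz.
Qed.
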